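(* Let $(X,*,0)$ be a solid branchwise implicative weak BCC-algebra. Then $X$ is branchwise positive implicative if and only if $X$ is a commutative BCK-algebra.
   Context: A weak BCC-algebra is a set $X$ with a binary operation $*$ and a constant $0$ satisfying, for all $x,y,z\in X$: (i) $((x*y)*(z*y))*(x*z)=0$; (ii) $x*x=0$; (iii) $x*0=x$; (iv) $x*y=y*x=0$ implies $x=y$. The relation $x\leqslant y$ iff $x*y=0$ is a partial order on $X$. Let $I(X)$ be the set of minimal elements of $X$ with respect to $\leqslant$. For $a\in I(X)$ the branch initiated by $a$ is $B(a)=\{x\in X: a\leqslant x\}$; ''belonging to the same branch'' means lying in a common $B(a)$. A weak BCC-algebra is called (left) solid if $(x*y)*z=(x*z)*y$ holds for all $x,y$ belonging to the same branch and all $z\in X$. It is branchwise implicative if $x*(y*x)=x$ for all $x,y$ in the same branch, and branchwise positive implicative if $(x*y)*y=x*y$ for all $x,y$ in the same branch. A BCK-algebra is a weak BCC-algebra satisfying $0*x=0$ and $(x*y)*z=(x*z)*y$ for all $x,y,z$; it is commutative if $x*(x*y)=y*(y*x)$ for all $x,y$. *)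

(* Defs.v *)
Set Implicit Arguments.

Section WeakBCC.
Variables (X : Type) (op : X -> X -> X) (z : X).

Definition is_weakBCC : Prop :=
  (forall x y w, op (op (op x y) (op w y)) (op x w) = z) /\
  (forall x, op x x = z) /\
  (forall x, op x z = x) /\
  (forall x y, op x y = z -> op y x = z -> x = y).

Definition bcc_le (x y : X) : Prop := op x y = z.

Definition minimal (a : X) : Prop := forall x, bcc_le x a -> x = a.

Definition in_branch (a x : X) : Prop := bcc_le a x.

Definition same_branch (x y : X) : Prop :=
  exists a, minimal a /\ in_branch a x /\ in_branch a y.

Definition solid : Prop :=
  forall x y w, same_branch x y -> op (op x y) w = op (op x w) y.

Definition branchwise_implicative : Prop :=
  forall x y, same_branch x y -> op x (op y x) = x.

Definition branchwise_positive_implicative : Prop :=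
  forall x y, same_branch x y -> op (op x y) y = op x y.

Definition is_BCK : Prop :=
  is_weakBCC /\
  (forall x, op z x = z) /\
  (forall x y w, op (op x y) w = op (op x w) y).

Definition is_commutative_BCK : Prop :=
  is_BCK /\ (forall x y, op x (op x y) = op y (op y x)).

End WeakBCC.

(* Main.v *)
Require Import Defs.

Lemma wb_props (X : Type) (op : X -> X -> X) (z : X) :
  is_weakBCC op z ->
  (forall x y w, op (op (op x y) (op w y)) (op x w) = z) /\
  (forall x, op x x = z) /\
  (forall x, op x z = x) /\
  (forall x y, op x y = z -> op y x = z -> x = y).
Proof. intro H; exact H. Qed.

Section S.
Context (X : Type) (op : X -> X -> X) (z : X).
Local Infix "*" := op.

Lemma le_z (H : is_weakBCC op z) a : a * z = z -> a = z.
Proof. destruct H as (H1 & H2 & H3 & H4). intro E. rewrite H3 in E. exact E. Qed.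

Lemma trans_le (H : is_weakBCC op z) a b c : a * b = z -> b * c = z -> a * c = z.
Proof.
  destruct H as (H1 & H2 & H3 & H4). intros E1 E2.
  pose proof (H1 a c b) as E. rewrite E1, E2, H3, H3 in E. exact E.
Qed.

Lemma anti_le (H : is_weakBCC op z) u v w : u * v = z -> (w * v) * (w * u) = z.
Proof.
  destruct H as (H1 & H2 & H3 & H4). intros E.
  pose proof (H1 w v u) as E'. rewrite E, H3 in E'. exact E'.
Qed.

Lemma xp_le (H : is_weakBCC op z) x : (z * (z * x)) * x = z.
Proof.
  destruct H as (H1 & H2 & H3 & H4).
  pose proof (H1 x x z) as E. rewrite H2, H3 in E. exact E.
Qed.

Lemma triple (H : is_weakBCC op z) x : z * (z * (z * x)) = z * x.
Proof.
  pose proof H as (H1 & H2 & H3 & H4). apply H4.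
  - apply xp_le; auto.
  - apply anti_le; auto. apply xp_le; auto.
Qed.

Lemma key (H : is_weakBCC op z) x y : x * y = z -> z * x = z * y.
Proof.
  pose proof H as (H1 & H2 & H3 & H4). intro E.
  assert (Eba : (z * y) * (z * x) = z) by (apply anti_le; auto).
  apply H4.
  - pose proof (H1 (z * y) (z * x) z) as E'.
    rewrite Eba, H3, triple in E'; auto.
  - exact Eba.
Qed.

Lemma m_minimal (H : is_weakBCC op z) x : minimal op z (z * (z * x)).
Proof.
  pose proof H as (H1 & H2 & H3 & H4). intros y Ey. unfold bcc_le in Ey.
  pose proof (key H _ _ Ey) as K. rewrite triple in K; auto.
  apply H4; auto.
  pose proof (xp_le H y) as E. rewrite K in E. exact E.
Qed.

Lemma z_minimal (H : is_weakBCC op z) : minimal op z z.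
Proof. intros y Ey. apply le_z; auto. Qed.

Lemma all_same (H : is_weakBCC op z) (Z : forall x, z * x = z) x y :
  same_branch op z x y.
Proof. exists z. split; [apply z_minimal; auto|]. split; apply Z. Qed.

Lemma bck_lemma (H : is_weakBCC op z) (Z : forall x, z * x = z)
  (E : forall x y w, (x * y) * w = (x * w) * y)
  (I : forall x y, x * (y * x) = x) x y t :
  t * y = z -> t * (x * y) = z -> t = z.
Proof.
  pose proof H as (H1 & H2 & H3 & H4). intros T1 T2.
  pose proof (H1 x y t) as E'. rewrite T1, H3 in E'.
  assert (T3 : t * (x * t) = z) by (apply (trans_le H _ _ _ T2 E')).
  rewrite I in T3. exact T3.
Qed.

Lemma bck_sub (H : is_weakBCC op z) (Z : forall x, z * x = z)
  (E : forall x y w, (x * y) * w = (x * w) * y) a b : (a * b) * a = z.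
Proof. pose proof H as (H1 & H2 & H3 & H4). rewrite E, H2. apply Z. Qed.

Lemma bck_aab (H : is_weakBCC op z)
  (E : forall x y w, (x * y) * w = (x * w) * y) a b : (a * (a * b)) * b = z.
Proof. pose proof H as (H1 & H2 & H3 & H4). rewrite E. apply H2. Qed.

Lemma meet_le (H : is_weakBCC op z) (Z : forall x, z * x = z)
  (E : forall x y w, (x * y) * w = (x * w) * y)
  (I : forall x y, x * (y * x) = x) x y :
  (y * (y * x)) * (x * (x * y)) = z.
Proof.
  pose proof H as (H1 & H2 & H3 & H4).
  set (v := y * (y * x)).
  assert (Vx : v * x = z) by (apply bck_aab; auto).
  assert (Vy : v * y = z) by (unfold v; rewrite E, H2; apply Z).
  apply (bck_lemma H Z E I x y).
  - apply (trans_le H _ v); [apply bck_sub; auto | exact Vy].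
  -
    assert (Mon : ((v * (x * (x * y))) * (x * (x * (x * y)))) = z).
    { pose proof (H1 v (x * (x * y)) x) as M. rewrite Vx, H3 in M. exact M. }
    assert (Tr : x * (x * (x * y)) = x * y).
    { apply H4; [apply bck_aab; auto|]. apply anti_le; auto. apply bck_aab; auto. }
    rewrite Tr in Mon. exact Mon.
Qed.

End S.

Theorem theorem3p9 (X : Type) (op : X -> X -> X) (z : X) :
  is_weakBCC op z ->
  solid op z ->
  branchwise_implicative op z ->
  (branchwise_positive_implicative op z <-> is_commutative_BCK op z).
Proof.
  intros H Sol Imp. pose proof H as (H1 & H2 & H3 & H4). split.
  - intro P.
    assert (Z : forall x, op z x = z).
    { intro x. set (m := op z (op z x)).
      assert (Sb : same_branch op z m x).
      { exists m. split; [apply m_minimal; auto|]. split; [apply H2| apply xp_le; auto]. }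
      pose proof (P m x Sb) as E. unfold m in E. rewrite (xp_le _ _ _ H) in E. exact E. }
    assert (E : forall x y w, op (op x y) w = op (op x w) y).
    { intros. apply Sol. apply all_same; auto. }
    assert (I : forall x y, op x (op y x) = x).
    { intros. apply Imp. apply all_same; auto. }
    split; [split; [exact H | split; [exact Z | exact E]]|].
    intros x y. apply H4; apply meet_le; auto.
  - intros [[_ [Z E]] _] x y _.
    assert (I : forall x y, op x (op y x) = x).
    { intros. apply Imp. apply all_same; auto. }
    apply H4; [apply bck_sub; auto|].
    apply (bck_lemma _ _ _ H Z E I x y).
    + apply bck_aab; auto.
    + apply bck_sub; auto.
Qed.
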